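(* Let $\{\mathbb{P}_{s,t}:0\le s\le t\}$ and $\{\mathbb{P}'_{s,t}:0\le s\le t\}$ be polynomial processes, each having the harness property (i.e. there exist $\mathbb{X},\mathbb{X}'\in\mathcal{Q}$ with $\mathbb{P}_{0,t}\mathbb{F}=(\mathbb{F}+t\mathbb{X})\mathbb{P}_{0,t}$ and $\mathbb{P}'_{0,t}\mathbb{F}=(\mathbb{F}+t\mathbb{X}')\mathbb{P}'_{0,t}$ for all $t\ge0$). If their infinitesimal generators coincide, $\mathbb{A}_t=\mathbb{A}'_t$ for all $t>0$, then $\mathbb{P}_{s,t}=\mathbb{P}'_{s,t}$ for all $0\le s\le t$. That is, a polynomial process with the harness property is uniquely determined by its generator.
   Context: $\mathcal{Q}$ denotes the real linear space of all infinite sequences $\mathbb{P}=(p_0,p_1,\dots)$ of real polynomials in $x$, with product $\mathbb{P}\mathbb{Q}=\mathbb{R}=(r_0,r_1,\dots)$, $r_k(x)=\sum_{j=0}^{\deg q_k}[q_k]_j\,p_j(x)$ for $\mathbb{Q}=(q_0,q_1,\dots)$, where $[q]_j$ is the coefficient of $x^j$ in $q$ (this corresponds to composition of linear maps of the polynomial space, a map $\mathsf{P}$ being identified with $(\mathsf{P}(1),\mathsf{P}(x),\mathsf{P}(x^2),\dots)$). Special elements: $\mathbb{E}=(1,x,x^2,\dots)$ (identity), $\mathbb{F}=(x,x^2,\dots)$, $\mathbb{D}=(0,1,x,x^2,\dots)$. A polynomial process is a family $\{\mathbb{P}_{s,t}\in\mathcal{Q}:0\le s\le t\}$ with: (i)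 the $n$-th component of $\mathbb{P}_{s,t}$ is a polynomial of degree exactly $n$ for every $n\ge0$; (ii) $\mathbb{P}_{s,t}(\mathbb{E}-\mathbb{F}\mathbb{D})=\mathbb{E}-\mathbb{F}\mathbb{D}$; (iii) $\mathbb{P}_{s,t}\mathbb{P}_{t,u}=\mathbb{P}_{s,u}$ for $0\le s\le t\le u$. Its infinitesimal generator is $\mathbb{A}_t=\lim_{h\to0^+}\frac1h(\mathbb{P}_{t-h,t}-\mathbb{E})$, $t>0$, limit taken coefficientwise (it exists under the harness property). *)

(* Defs.v *)
From HB Require Import structures.
From mathcomp Require Import all_boot all_order all_algebra.
From mathcomp Require Import all_classical all_reals all_analysis.
Set Implicit Arguments. Unset Strict Implicit. Unset Printing Implicit Defensive.
Import Order.TTheory GRing.Theory Num.Theory.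
Local Open Scope classical_set_scope.
Local Open Scope ring_scope.

Section Q.
Variable R : realType.

Definition Qseq := nat -> {poly R}.

(* Product: (P Q)_k = sum_j [q_k]_j p_j  (composition of linear maps). *)
Definition qmul (P Q : Qseq) : Qseq :=
  fun k => \sum_(j < size (Q k)) (Q k)`_j *: P j.

Definition qadd (P Q : Qseq) : Qseq := fun k => P k + Q k.
Definition qsub (P Q : Qseq) : Qseq := fun k => P k - Q k.
Definition qscale (c : R) (P : Qseq) : Qseq := fun k => c *: P k.

Definition qE : Qseq := fun n => 'X^n.
Definition qF : Qseq := fun n => 'X^(n.+1).
Definition qD : Qseq := fun n => if n is m.+1 then 'X^m else 0.

Definition polynomial_process (P : R -> R -> Qseq) : Prop :=
  (forall s t n, 0 <= s -> s <= t -> size (P s t n) = n.+1) /\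
  (forall s t, 0 <= s -> s <= t ->
     qmul (P s t) (qsub qE (qmul qF qD)) = qsub qE (qmul qF qD)) /\
  (forall s t u, 0 <= s -> s <= t -> t <= u ->
     qmul (P s t) (P t u) = P s u).

Definition harness (P : R -> R -> Qseq) : Prop :=
  exists X : Qseq, forall t, 0 <= t ->
    qmul (P 0 t) qF = qmul (qadd qF (qscale t X)) (P 0 t).

Definition is_generator (P : R -> R -> Qseq) (A : R -> Qseq) : Prop :=
  forall t, 0 < t -> forall n j : nat,
    (fun h : R => h^-1 * ((P (t - h) t n)`_j - (qE n)`_j))
      @ (0 : R)^'+ --> (A t n)`_j.

End Q.

(* Main.v *)
Require Import Defs.
From HB Require Import structures.
From mathcomp Require Import all_boot all_order all_algebra.
From mathcomp Require Import all_classical all_reals all_analysis.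
From mathcomp Require Import ring.
Import Order.TTheory GRing.Theory Num.Theory.
Local Open Scope ring_scope.

Section Aux.
Variable R : realType.
Implicit Types (Y : Qseq R) (P : R -> R -> Qseq R).

Lemma qmul_F Y k : qmul Y (qF R) k = Y k.+1.
Proof.
rewrite /qmul /qF size_polyXn big_ord_recr /= big1 ?add0r.
  by rewrite coefXn eqxx scale1r.
by move=> i _; rewrite coefXn ltn_eqF //= mulr0n scale0r.
Qed.

Lemma proc_one P s t : polynomial_process P -> 0 <= s -> s <= t -> P s t 0%N = 1.
Proof.
move=> [_ [H2 _]] s0 st; have := congr1 (fun Q => Q 0%N) (H2 s t s0 st).
rewrite /qmul /qsub /qE /=.
have -> : (\sum_(j < size (qD R 0)) (qD R 0)`_j *: qF R j) = 0.
  by rewrite /qD size_poly0 big_ord0.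
rewrite expr0 subr0 size_poly1 big_ord1 coefC /= scale1r => ->; by [].
Qed.

Lemma harness_exp P X t k : polynomial_process P -> 0 <= t ->
  qmul (P 0 t) (qF R) = qmul (qadd (qF R) (qscale t X)) (P 0 t) ->
  P 0 t k.+1 = \sum_(j < k.+1) (P 0 t k)`_j *: ('X^(j.+1) + t *: X j).
Proof.
move=> [H1 _] t0 /(congr1 (fun Q => Q k)); rewrite qmul_F => ->.
by rewrite /qmul H1 // /qadd /qscale /qF.
Qed.

Lemma P00 P k : polynomial_process P -> harness P -> P 0 0 k = 'X^k.
Proof.
move=> PP [X HX]; elim: k => [|k IH]; first by rewrite proc_one // expr0.
rewrite (@harness_exp P X 0 k PP (lexx 0) (HX 0 (lexx 0))) IH big_ord_recr /= big1 ?add0r.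
  by rewrite coefXn eqxx scale0r addr0 scale1r.
by move=> i _; rewrite coefXn ltn_eqF //= mulr0n scale0r.
Qed.

Lemma polyfun P : polynomial_process P -> harness P ->
  exists Q : nat -> nat -> {poly R}, forall k c t, 0 <= t -> (P 0 t k)`_c = (Q k c).[t].
Proof.
move=> PP [X HX].
have H : forall k, exists Qk : nat -> {poly R}, forall c t, 0 <= t -> (P 0 t k)`_c = (Qk c).[t].
  elim=> [|k [Qk HQ]].
    by exists (fun c => ((c == 0)%N%:R)%:P) => c t t0; rewrite proc_one // coef1 hornerC.
  exists (fun c => \sum_(j < k.+1) Qk j * ((('X^(j.+1))`_c)%:P + 'X * ((X j)`_c)%:P)) => c t t0.
  rewrite (@harness_exp P X t k PP t0 (HX t t0)) coef_sum horner_sum; apply: eq_bigr => j _.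
  by rewrite coefZ coefD coefZ HQ // hornerM hornerD hornerM hornerX !hornerC.
have [Q HQ] := choice H; exists Q => k; exact: HQ.
Qed.

End Aux.

Section Aux2.
Variable R : realType.
Local Open Scope classical_set_scope.

Lemma cvg_shift (q : {poly R}) t :
  (fun h : R => q.[t - h]) @ 0^'+ --> q.[t].
Proof.
have E : forall h, q.[t - h] = (q \Po (t%:P - 'X)).[h].
  by move=> h; rewrite horner_comp !hornerE.
rewrite (funext E); have -> : q.[t] = (q \Po (t%:P - 'X)).[0] by rewrite -E subr0.
apply: cvg_at_right_filter; exact: continuous_horner.
Qed.

Lemma left_deriv (q : {poly R}) t :
  (fun h : R => h^-1 * (q.[t] - q.[t - h])) @ 0^'+ --> q^`().[t].
Proof.
set r := q.[t]%:P - (q \Po (t%:P - 'X)).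
have Er : forall h, r.[h] = q.[t] - q.[t - h].
  by move=> h; rewrite /r hornerD hornerN hornerC horner_comp !hornerE.
have : root r 0 by rewrite /root Er subr0 subrr.
move=> /factor_theorem [s Hs].
have Hs0 : s.[0] = q^`().[t].
  have : r^`().[0] = q^`().[t].
    rewrite /r derivB derivC sub0r deriv_comp derivB derivC derivX sub0r.
    by rewrite mulrN1 opprK horner_comp !hornerE subr0.
  by rewrite Hs derivM derivB derivC derivX subr0 !hornerE subr0 mulr1.
rewrite -Hs0.
have HH : {near 0^'+, (fun h : R => s.[h]) =1 (fun h => h^-1 * (q.[t] - q.[t - h]))}.
  apply: filterS (nbhs_right_gt 0) => h hp /=.
  by rewrite -Er Hs hornerM !hornerE /= subr0 mulrAC mulVf ?mul1r // gt_eqF.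
apply: cvg_trans (near_eq_cvg HH) _.
apply: cvg_at_right_filter; exact: continuous_horner.
Qed.

Lemma cvg_bigsum (F : set_system R) (FF : Filter F) (f : nat -> R -> R^o) (l : nat -> R^o) n :
  (forall j, (j < n)%N -> (f j x @[x --> F] --> l j)) ->
  \sum_(j < n) f j x @[x --> F] --> \sum_(j < n) l j.
Proof.
elim: n => [|n IH] H.
  under eq_fun do rewrite big_ord0. rewrite big_ord0; exact: cvg_cst.
under eq_fun do rewrite big_ord_recr /=. rewrite big_ord_recr /=.
apply: cvgD; last exact: H.
by apply: IH => j jn; apply: H; rewrite ltnS ltnW.
Qed.


Lemma ode (P : R -> R -> Qseq R) (A : R -> Qseq R) (Q : nat -> nat -> {poly R}) :
  polynomial_process P -> is_generator P A ->
  (forall k c t, 0 <= t -> (P 0 t k)`_c = (Q k c).[t]) ->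
  forall t, 0 < t -> forall k c,
  (Q k c)^`().[t] = \sum_(j < k.+1) (A t k)`_j * (Q j c).[t].
Proof.
move=> [H1 [_ H3]] HA HQ t t0 k c.
set f := fun h : R => h^-1 * ((P 0 t k)`_c - (P 0 (t - h) k)`_c).
have L1 : f @ 0^'+ --> (Q k c)^`().[t].
  have HH : {near 0^'+, (fun h => h^-1 * ((Q k c).[t] - (Q k c).[t-h])) =1 f}.
    apply: filterS2 (nbhs_right_gt 0) (nbhs_right_lt t0) => h h0 ht /=.
    by rewrite /f !HQ // ?subr_ge0 ltW.
  exact: cvg_trans (near_eq_cvg HH) (left_deriv _ _).
have L2 : f @ 0^'+ --> \sum_(j < k.+1) (A t k)`_j * (Q j c).[t].
  have HH : {near 0^'+, (fun h => \sum_(j < k.+1)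
      (h^-1 * ((P (t - h) t k)`_j - (qE R k)`_j)) * (Q j c).[t - h]) =1 f}.
    apply: filterS2 (nbhs_right_gt 0) (nbhs_right_lt t0) => h h0 ht /=.
    have th : 0 <= t - h by rewrite subr_ge0 ltW.
    have e1 : P 0 t k = qmul (P 0 (t-h)) (P (t-h) t) k.
      by rewrite H3 // ?lexx // gerBl ltW.
    rewrite /f e1 /qmul H1 // ?gerBl ?ltW // coef_sum.
    have e2 : (P 0 (t-h) k)`_c = \sum_(j<k.+1) (qE R k)`_j * (P 0 (t-h) j)`_c.
      rewrite /qE big_ord_recr /= big1 ?add0r; first by rewrite coefXn eqxx mul1r.
      by move=> i _; rewrite coefXn ltn_eqF //= mulr0n mul0r.
    rewrite e2 -sumrB mulr_sumr; apply: eq_bigr => j _.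
    by rewrite coefZ -mulrBl mulrA HQ.
  apply: cvg_trans (near_eq_cvg HH) _.
  apply: (@cvg_bigsum _ _ (fun j h => (h^-1 * ((P (t - h) t k)`_j - (qE R k)`_j)) * (Q j c).[t - h])
     (fun j => (A t k)`_j * (Q j c).[t])) => j _.
  apply: cvgM; first exact: HA.
  exact: cvg_shift.
exact: (cvg_unique (@Rhausdorff R) L1 L2).
Qed.

End Aux2.

Section Aux4.
Variable R : realType.

Lemma poly_pos0 (p : {poly R}) : (forall t, 0 < t -> p.[t] = 0) -> p = 0.
Proof.
move=> H; apply/eqP; apply: contraT => p0.
have Hall : all (root p) [seq (i.+1)%:R : R | i <- iota 0 (size p)].
  by apply/allP => x /mapP [i _ ->]; apply/rootP; apply: H; exact: ltr0Sn.
have Hu : uniq [seq (i.+1)%:R : R | i <- iota 0 (size p)].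
  rewrite map_inj_uniq ?iota_uniq // => i j /eqP; rewrite eqr_nat => /eqP [] //.
by have := max_poly_roots p0 Hall Hu; rewrite size_map size_iota ltnn.
Qed.

Lemma ode_zero (d g : {poly R}) : d^`() * g = d * g^`() -> d.[0] = 0 -> g.[0] != 0 -> d = 0.
Proof.
move=> E d0 g0.
have key : forall n i, (i <= n)%N -> d`_i = 0.
  elim=> [|n IH] i.
    by rewrite leqn0 => /eqP ->; rewrite -horner_coef0.
  rewrite leq_eqVlt => /orP [/eqP -> | ]; last by rewrite ltnS; exact: IH.
  have := congr1 (fun p : {poly R} => p`_n) E; rewrite !coefM.
  rewrite big_ord_recr /= big1; last first.
    by move=> j _; rewrite coef_deriv IH ?mul0rn ?mul0r.
  rewrite big1; last by move=> j _; rewrite IH ?mul0r // -ltnS.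
  rewrite add0r subnn coef_deriv -horner_coef0 => /eqP.
  rewrite mulf_eq0 mulrn_eq0 /= => /orP [/eqP // | g00].
  by rewrite g00 in g0.
by apply/polyP => n; rewrite coef0 (key n n).
Qed.

Lemma indep (Y : Qseq R) : (forall j, size (Y j) = j.+1) ->
  forall N (r : nat -> R), \sum_(j < N) r j *: Y j = 0 -> forall j, (j < N)%N -> r j = 0.
Proof.
move=> HY; elim=> [|N IH] r E j jN; first by [].
move: E; rewrite big_ord_recr /= => E.
have nz : (Y N)`_N != 0.
  have -> : (Y N)`_N = lead_coef (Y N) by rewrite /lead_coef HY.
  by rewrite lead_coef_eq0 -size_poly_eq0 HY.
have rN : r N = 0.
  have := congr1 (fun p : {poly R} => p`_N) E; rewrite coefD coef_sum big1 ?add0r; last first.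
    by move=> i _; rewrite coefZ nth_default ?mulr0 // HY.
  rewrite coefZ coef0 => /eqP; rewrite mulf_eq0 => /orP [/eqP // | /eqP H0].
  by rewrite H0 eqxx in nz.
move: jN; rewrite ltnS leq_eqVlt => /orP [/eqP -> // | jN].
rewrite rN scale0r addr0 in E; exact: IH r E j jN.
Qed.

Lemma sum_ext (Y : Qseq R) (p : {poly R}) m :
  \sum_(j < size p + m) p`_j *: Y j = \sum_(j < size p) p`_j *: Y j.
Proof.
elim: m => [|m IH]; first by rewrite addn0.
by rewrite addnS big_ord_recr /= IH nth_default ?leq_addr // scale0r addr0.
Qed.

Lemma qmul_inj (Y : Qseq R) (p q : {poly R}) : (forall j, size (Y j) = j.+1) ->
  \sum_(j < size p) p`_j *: Y j = \sum_(j < size q) q`_j *: Y j -> p = q.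
Proof.
move=> HY E.
have Ep : \sum_(j < maxn (size p) (size q)) p`_j *: Y j = \sum_(j < size p) p`_j *: Y j.
  by rewrite -(subnKC (leq_maxl (size p) (size q))) sum_ext.
have Eq : \sum_(j < maxn (size p) (size q)) q`_j *: Y j = \sum_(j < size q) q`_j *: Y j.
  by rewrite -(subnKC (leq_maxr (size p) (size q))) sum_ext.
have Z : \sum_(j < maxn (size p) (size q)) (p`_j - q`_j) *: Y j = 0.
  under eq_bigr do rewrite scalerBl.
  by rewrite sumrB Ep Eq E subrr.
apply/polyP => j; case: (ltnP j (maxn (size p) (size q))) => jN.
  by apply/eqP; rewrite -subr_eq0; apply/eqP; exact: (@indep Y HY _ (fun j => p`_j - q`_j) Z j jN).
rewrite !nth_default //; apply: leq_trans jN; [exact: leq_maxr | exact: leq_maxl].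
Qed.

End Aux4.

Theorem proposition2p3 (R : realType) (P P' : R -> R -> Qseq R) (A : R -> Qseq R) :
  polynomial_process P -> polynomial_process P' ->
  harness P -> harness P' ->
  is_generator P A -> is_generator P' A ->
  forall s t : R, 0 <= s -> s <= t -> P s t = P' s t.
Proof.
move=> PP PP' HP HP' GA GA' s t s0 st.
have [Q HQ] := @polyfun R P PP HP.
have [Q' HQ'] := @polyfun R P' PP' HP'.
have ode1 := @ode R P A Q PP GA HQ.
have ode2 := @ode R P' A Q' PP' GA' HQ'.
have EQ : forall k c, Q k c = Q' k c.
  elim/ltn_ind => k IH c.
  apply/eqP; rewrite -subr_eq0; apply/eqP.
  apply: (@ode_zero R _ (Q k k)).
  - apply/eqP; rewrite -subr_eq0; apply/eqP; apply: poly_pos0 => x x0.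
    have Hd : (Q k c - Q' k c)^`().[x] = (A x k)`_k * (Q k c - Q' k c).[x].
      rewrite derivB !hornerE ode1 // ode2 // !big_ord_recr /=.
      have -> : \sum_(i < k) (A x k)`_i * (Q' i c).[x] = \sum_(i < k) (A x k)`_i * (Q i c).[x].
        by apply: eq_bigr => i _; rewrite IH.
      ring.
    have Hg : (Q k k)^`().[x] = (A x k)`_k * (Q k k).[x].
      rewrite ode1 // big_ord_recr /= big1 ?add0r //.
      move=> i _; rewrite -HQ ?ltW // (@nth_default _ 0 (P 0 x i) k) ?mulr0 //.
      by rewrite (proj1 PP) ?lexx ?ltW.
    rewrite hornerD hornerN !hornerM Hd Hg; ring.
  - by rewrite !hornerE -HQ ?lexx // -HQ' ?lexx // (@P00 R P k PP HP) (@P00 R P' k PP' HP') subrr.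
  - by rewrite -HQ ?lexx // (@P00 R P k PP HP) coefXn eqxx oner_neq0.
have E0 : forall x, 0 <= x -> P 0 x = P' 0 x.
  move=> x x0; apply: funext => k; apply/polyP => c.
  by rewrite HQ // HQ' // EQ.
apply: funext => k.
have := congr1 (fun Y => Y k) ((proj2 (proj2 PP)) 0 s t (lexx 0) s0 st).
have := congr1 (fun Y => Y k) ((proj2 (proj2 PP')) 0 s t (lexx 0) s0 st).
rewrite /qmul -(E0 s s0) -(E0 t (le_trans s0 st)) => <- E.
apply: (@qmul_inj R (P 0 s)); last by rewrite E.
by move=> j; rewrite (proj1 PP) ?lexx.
Qed.
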